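(* Let $(X,U)$ be a minimizer of Problem 1 and let $(K,H,G,F)$ be the unique solution of $\begin{bmatrix} K & H \\ G & F \end{bmatrix}\begin{bmatrix} X \\ Z \end{bmatrix} = \begin{bmatrix} U \\ V \end{bmatrix}$. Then the dynamic state feedback $z(t+1)=Fz(t)+Gx(t)$, $u(t)=Hz(t)+Kx(t)$ is an $N$-step deadbeat controller for the plant $x(t+1)=Ax(t)+Bu(t)$: the closed-loop matrix $\mathcal{A}_{cl}=\begin{bmatrix}A+BK & BH\\ G & F\end{bmatrix}$ is nilpotent with $\mathcal{A}_{cl}^N=0$ (all its eigenvalues are $0$), so that for every initial state $(x(0),z(0))$ the closed-loop state satisfies $(x(t),z(t))=0$ for all $t\ge N$.
   Context: Plant: $x(t+1)=Ax(t)+Bu(t)$, $y(t)=Cx(t)+Du(t)$ with $x\in\mathbb{R}^n$, $u\in\mathbb{R}^m$, $y\in\mathbb{R}^p$, $(A,B)$ reachable, horizon $N\ge 2$. $P\in\mathbb{R}^{N\times N}$ is the nilpotent shift matrix $P=\begin{bmatrix}0 & 0\\ I_{N-1} & 0\end{bmatrix}$; $\otimes$ is the Kronecker product; $\mathrm{e}_1\in\mathbb{R}^N$ is the first standard basis vector; $\|W\|_1=\sum_{i,j}|w_{ij}|$; $\mathrm{abs}(W)$ is entrywise absolute value; $\mathbf{1}_k$ is the all-ones vector. Given $s\in\mathbb{R}^p$, Problem 1 is: minimize $\|U\|_1$ over $X\in\mathbb{R}^{n\times nN}$, $U\in\mathbb{R}^{m\times nN}$ subject to $AX+BU=X(P\otimes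 I_n)$, $X(\mathrm{e}_1\otimes I_n)=I_n$, and $\mathrm{abs}(CX+DU)\le s(\mathbf{1}_n\otimes\mathbf{1}_N)^\top$ entrywise. $Z=\begin{bmatrix}0_{n(N-1)\times n} & I_{n(N-1)}\end{bmatrix}$, $V=Z(P\otimes I_n)$. *)

(* Defs.v *)
From HB Require Import structures.
From mathcomp Require Import all_boot all_order all_algebra.
From mathcomp Require Export mxtens.
Set Implicit Arguments. Unset Strict Implicit. Unset Printing Implicit Defensive.
Import Order.TTheory GRing.Theory Num.Theory.
Local Open Scope ring_scope.

Section Defs.
Variable R : realFieldType.

Definition reachable (n m : nat) (A : 'M[R]_n) (B : 'M[R]_(n, m)) : bool :=
  \rank (\mxrow_(i < n) (A ^+ i *m B)) == n.

Definition shiftP (N : nat) : 'M[R]_N := \matrix_(i, j) ((i : nat) == (j : nat).+1)%N%:R.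

Definition e1 (N : nat) : 'cV[R]_N := \col_i ((i : nat) == 0%N)%:R.

(* Z = [0_{n(N-1) x n}  I_{n(N-1)}] : R^{n(N-1) x nN} *)
Definition Zmx (n N : nat) : 'M[R]_(n * (N - 1), N * n) :=
  \matrix_(i, j) ((j : nat) == (i : nat) + n)%N%:R.

Definition Vmx (n N : nat) : 'M[R]_(n * (N - 1), N * n) :=
  Zmx n N *m (tensmx (shiftP N) (1%:M : 'M[R]_n)).

Definition norm1 (p q : nat) (W : 'M[R]_(p, q)) : R := \sum_i \sum_j `|W i j|.

Definition feasible1 (n m p N : nat) (A : 'M[R]_n) (B : 'M[R]_(n, m))
  (C : 'M[R]_(p, n)) (D : 'M[R]_(p, m)) (s : 'cV[R]_p)
  (X : 'M[R]_(n, N * n)) (U : 'M[R]_(m, N * n)) : Prop :=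
  [/\ A *m X + B *m U = X *m tensmx (shiftP N) (1%:M : 'M[R]_n),
      X *m castmx (erefl, mul1n n) (tensmx (e1 N) (1%:M : 'M[R]_n)) = 1%:M
    & forall i j, `|(C *m X + D *m U) i j| <= s i 0].

Definition minimizer1 (n m p N : nat) (A : 'M[R]_n) (B : 'M[R]_(n, m))
  (C : 'M[R]_(p, n)) (D : 'M[R]_(p, m)) (s : 'cV[R]_p)
  (X : 'M[R]_(n, N * n)) (U : 'M[R]_(m, N * n)) : Prop :=
  feasible1 A B C D s X U /\
  forall (X' : 'M[R]_(n, N * n)) (U' : 'M[R]_(m, N * n)), feasible1 A B C D s X' U' -> norm1 U <= norm1 U'.

End Defs.

(* Main.v *)
Require Import Defs.
From HB Require Import structures.
From mathcomp Require Import all_boot all_order all_algebra.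
Import Order.TTheory GRing.Theory Num.Theory.
Local Open Scope ring_scope.

Section Aux.
Variable R : realFieldType.

Lemma sum_delta k (f : 'I_k -> R) c (Hc : (c < k)%N) :
  \sum_(l < k) f l * ((l : nat) == c)%:R = f (Ordinal Hc).
Proof.
rewrite (bigD1 (Ordinal Hc)) //= eqxx mulr1 big1 ?addr0 // => l.
rewrite -val_eqE /= => /negbTE ->; by rewrite mulr0.
Qed.

Lemma sum_delta0 k (f : 'I_k -> R) c (Hc : (k <= c)%N) :
  \sum_(l < k) f l * ((l : nat) == c)%:R = 0.
Proof.
rewrite big1 // => l _; have : (l : nat) != c by rewrite neq_ltn (leq_trans (ltn_ord l) Hc).
by move/negbTE ->; rewrite mulr0.
Qed.

Lemma shiftP_exp N k : (shiftP R N) ^+ k = \matrix_(i, j) ((i : nat) == j + k)%N%:R.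
Proof.
elim: k => [|k IH].
  apply/matrixP => i j; rewrite expr0 !mxE addn0.
  by [].
apply/matrixP => i j; rewrite exprSr -mulmxE IH !mxE.
under eq_bigr => l _ do rewrite !mxE.
case: (ltnP j.+1 N) => Hj.
  rewrite (@sum_delta N (fun l : 'I_N => ((i : nat) == l + k)%N%:R) _ Hj) /=.
  by rewrite addSnnS.
rewrite (@sum_delta0 N (fun l : 'I_N => ((i : nat) == l + k)%N%:R) _ Hj).
have : (i : nat) != (j + k.+1)%N.
  rewrite neq_ltn; apply/orP; left; apply: (leq_trans (ltn_ord i)).
  by rewrite -addSnnS (leq_trans Hj) // leq_addr.
by move/negbTE ->.
Qed.

Lemma shiftP_nil N : (shiftP R N) ^+ N = 0.
Proof.
apply/matrixP => i j; rewrite shiftP_exp !mxE.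
have : (i : nat) != (j + N)%N.
  by rewrite neq_ltn (leq_trans (ltn_ord i)) // leq_addl.
by move/negbTE ->.
Qed.

End Aux.
Section Aux2.
Variable R : realFieldType.
Lemma E1E n N (j : 'I_(N * n)) (k : 'I_n) :
  castmx (erefl, mul1n n) (tensmx (e1 R N) (1%:M : 'M[R]_n)) j k = ((j : nat) == k)%:R.
Proof.
rewrite castmxE !mxE /=.
rewrite -val_eqE /= (modn_small (ltn_ord k)).
case: (ltnP j n) => Hj.
  by rewrite divn_small // modn_small // eqxx mul1r.
have -> : (j %/ n == 0)%N = false.
  by apply/negbTE; rewrite -lt0n divn_gt0 // (leq_ltn_trans (leq0n k) (ltn_ord k)).
have -> : ((j : nat) == k) = false.
  by apply/negbTE; rewrite neq_ltn (leq_trans (ltn_ord k) Hj) orbT.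
by rewrite mul0r.
Qed.
End Aux2.

Theorem corollary2 (R : realFieldType) (n m p N : nat)
  (A : 'M[R]_n) (B : 'M[R]_(n, m)) (C : 'M[R]_(p, n)) (D : 'M[R]_(p, m))
  (s : 'cV[R]_p) (X : 'M[R]_(n, N * n)) (U : 'M[R]_(m, N * n))
  (K : 'M[R]_(m, n)) (H : 'M[R]_(m, n * (N - 1)))
  (G : 'M[R]_(n * (N - 1), n)) (F : 'M[R]_(n * (N - 1))) :
  (2 <= N)%N ->
  reachable A B ->
  minimizer1 A B C D s X U ->
  block_mx K H G F *m col_mx X (Zmx R n N) = col_mx U (Vmx R n N) ->
  let Acl := block_mx (A + B *m K) (B *m H) G F in
  [/\ Acl ^+ N = 0,
      (forall a : R, eigenvalue Acl a -> a = 0)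
    & forall (x : nat -> 'cV[R]_n) (z : nat -> 'cV[R]_(n * (N - 1)))
             (u : nat -> 'cV[R]_m),
        (forall t, x t.+1 = A *m x t + B *m u t) ->
        (forall t, z t.+1 = F *m z t + G *m x t) ->
        (forall t, u t = H *m z t + K *m x t) ->
        forall t, (N <= t)%N -> x t = 0 /\ z t = 0].
Proof.
move=> HN _ [[HAX HX1 _] _] Hsol Acl.
have [N' eN] : exists N', N = N'.+1 by exists N.-1; rewrite prednK // (ltn_trans _ HN).
set Z := Zmx R n N.
set S := tensmx (shiftP R N) (1%:M : 'M[R]_n).
set M := col_mx X Z.
move: Hsol; rewrite mul_block_col => /eq_col_mx [HU HV].
have HAM : Acl *m M = M *m S.
  rewrite /Acl /M mul_block_col mul_col_mx; congr col_mx.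
    by rewrite mulmxDl -!mulmxA -addrA -mulmxDr HU.
  by rewrite HV.
have Hpow : forall k, Acl ^+ k *m M = M *m S ^+ k.
  elim=> [|k IH]; first by rewrite !expr0 mul1mx mulmx1.
  by rewrite !exprSr -!mulmxE -mulmxA HAM mulmxA IH mulmxA.
have Spow : forall k, S ^+ k.+1 = tensmx (shiftP R N ^+ k.+1) (1%:M : 'M[R]_n).
  elim=> [|k IH]; first by rewrite !expr1.
  by rewrite exprSr -mulmxE IH tensmx_mul mulmx1 mulmxE -exprSr.
have HSN : S ^+ N = 0.
  by have := Spow N'; rewrite -eN shiftP_nil tens0mx.
have HQM : Acl ^+ N *m M = 0 by rewrite Hpow HSN mulmx0.
have HX : forall (l : 'I_n) (j : 'I_(N * n)), (j < n)%N -> X l j = ((l : nat) == j)%:R.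
  move=> l j Hj.
  have := congr1 (fun W : 'M[R]_n => W l (Ordinal Hj)) HX1; rewrite !mxE /=.
  under eq_bigr => c _ do rewrite E1E.
  rewrite (@sum_delta _ _ (fun c => X l c) _ (ltn_ord j)).
  have -> : Ordinal (ltn_ord j) = j by apply: val_inj.
  by move=> ->; rewrite -val_eqE.
have HQ : Acl ^+ N = 0.
  move: HQM; set Q := Acl ^+ N; rewrite -[Q]hsubmxK /M mul_row_col.
  set Q1 := lsubmx Q; set Q2 := rsubmx Q => HQM.
  have HQ1 : Q1 = 0.
    apply/matrixP => i j; rewrite [RHS]mxE.
    have Hjj : (j < N * n)%N by rewrite (leq_trans (ltn_ord j)) // eN mulSn leq_addr.
    have := congr1 (fun W : 'M[R]_(n + n * (N - 1), N * n) => W i (Ordinal Hjj)) HQM.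
    rewrite !mxE.
    under eq_bigr => l _ do rewrite (HX l (Ordinal Hjj) (ltn_ord j)) /=.
    rewrite (@sum_delta _ _ (fun l => Q1 i l) _ (ltn_ord j)).
    rewrite [X in _ + X]big1 ?addr0.
      have -> : Ordinal (ltn_ord j) = j by apply: val_inj.
      by move=> h; rewrite -h /Q1 mxE.
    move=> l _; rewrite /Z /Zmx !mxE /=.
    have : (j : nat) != (l + n)%N.
      by rewrite neq_ltn (leq_trans (ltn_ord j)) // leq_addl.
    by move/negbTE ->; rewrite mulr0.
  have HQ2 : Q2 = 0.
    apply/matrixP => i j; rewrite [RHS]mxE.
    have Hjj : (j + n < N * n)%N.
      have : (j < n * (N - 1))%N := ltn_ord j.
      move: (nat_of_ord j) => jj.
      by rewrite eN subSS subn0 mulSn addnC ltn_add2l mulnC.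
    have := congr1 (fun W : 'M[R]_(n + n * (N - 1), N * n) => W i (Ordinal Hjj)) HQM.
    rewrite HQ1 mul0mx add0r !mxE.
    under eq_bigr => l _ do rewrite /Z /Zmx !mxE /= eqn_add2r.
    under eq_bigr => l _ do rewrite eq_sym.
    rewrite (@sum_delta _ _ (fun l => Q i (rshift n l)) _ (ltn_ord j)).
    by have -> : Ordinal (ltn_ord j) = j by apply: val_inj.
  by rewrite HQ1 HQ2 row_mx0.
split => //.
  move=> a /eigenvalueP [v Hv vn0].
  have Hk : forall k, v *m Acl ^+ k = a ^+ k *: v.
    elim=> [|k IH]; first by rewrite !expr0 mulmx1 scale1r.
    by rewrite exprSr -mulmxE mulmxA IH -scalemxAl Hv scalerA -exprSr.
  have := Hk N; rewrite HQ mulmx0 => /esym/eqP.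
  rewrite scaler_eq0 (negbTE vn0) orbF expf_eq0 => /andP [_ /eqP //].
move=> x z u Hx Hz Hu t Ht.
have Hw : forall t, col_mx (x t) (z t) = Acl ^+ t *m col_mx (x 0%N) (z 0%N).
  elim=> [|k IH]; first by rewrite expr0 mul1mx.
  rewrite exprS -mulmxE -mulmxA -IH /Acl mul_block_col Hx Hz Hu; congr col_mx.
    by rewrite mulmxDr !mulmxA mulmxDl -addrA [X in _ + X]addrC.
  by rewrite addrC.
have := Hw t; rewrite -(subnK Ht) exprD HQ mulr0 mul0mx => /eqP.
by rewrite col_mx_eq0 => /andP [/eqP -> /eqP ->].
Qed.
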